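(* Let $n\ge2$, let $G$ be an absolutely continuous distribution function on $[0,\infty)$, $\lambda>0$, $\alpha_1,\dots,\alpha_n,\alpha^*_1,\dots,\alpha^*_n>0$. Let $\phi_1,\phi_2$ be Archimedean generators with pseudo-inverses $\psi_1,\psi_2$. Let $\boldsymbol{X}=(X_1,\dots,X_n)$ have joint distribution function $\phi_1\big(\sum_{i=1}^n\psi_1([G(\lambda x_i)]^{\alpha_i})\big)$ and $\boldsymbol{X}^*$ have joint distribution function $\phi_2\big(\sum_{i=1}^n\psi_2([G(\lambda x_i)]^{\alpha^*_i})\big)$. If $\phi_1$ or $\phi_2$ is log-convex, $\psi_2\circ\phi_1$ is super-additive, and $\prod_{i=1}^{j}\alpha^*_{[i]}\le\prod_{i=1}^{j}\alpha_{[i]}$ for all $j=1,\dots,n$, then $X_{n:n}\ge_{\rm st}X^*_{n:n}$.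
   Context: An Archimedean generator is an $n$-monotone function $\phi:[0,\infty)\to[0,1]$ with $\phi(0)=1$, $\lim_{x\to\infty}\phi(x)=0$ ($n$-monotone: $(-1)^k\phi^{(k)}\ge0$ for $k=0,\dots,n-2$ and $(-1)^{n-2}\phi^{(n-2)}$ decreasing and convex); $\psi=\phi^{-1}$ is its pseudo-inverse. $h$ super-additive means $h(x+y)\ge h(x)+h(y)$ for $x,y\ge0$. $\alpha_{[1]}\ge\dots\ge\alpha_{[n]}$ are the components in decreasing order. $X_{n:n}=\max_i X_i$. $X\le_{\rm st}Y$ means $P(X>x)\le P(Y>x)$ for all $x$. *)

(* Defs.v *)
From HB Require Import structures.
From mathcomp Require Import all_boot all_order all_algebra.
From mathcomp Require Import all_classical all_reals all_analysis.
Set Implicit Arguments. Unset Strict Implicit. Unset Printing Implicit Defensive.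
Import Order.TTheory GRing.Theory Num.Theory.
Import numFieldNormedType.Exports.
Local Open Scope classical_set_scope.
Local Open Scope ring_scope.

Definition n_monotone {R : realType} (n : nat) (phi : R -> R) : Prop :=
  [/\ (forall k x, (k < n - 2)%N -> 0 < x -> derivable (derive1n k phi) x 1),
      (forall k x, (k <= n - 2)%N -> 0 < x -> 0 <= (-1) ^+ k * derive1n k phi x),
      (forall x y, 0 < x -> x <= y ->
         (-1) ^+ (n - 2) * derive1n (n - 2) phi y
           <= (-1) ^+ (n - 2) * derive1n (n - 2) phi x) &
      (forall x y t, 0 < x -> 0 < y -> 0 <= t <= 1 ->
         (-1) ^+ (n - 2) * derive1n (n - 2) phi (t * x + (1 - t) * y)
           <= t * ((-1) ^+ (n - 2) * derive1n (n - 2) phi x)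
              + (1 - t) * ((-1) ^+ (n - 2) * derive1n (n - 2) phi y))].

(* Archimedean generator (only its values on [0,oo) matter). *)
Definition arch_generator {R : realType} (n : nat) (phi : R -> R) : Prop :=
  [/\ n_monotone n phi,
      (forall x, 0 <= x -> 0 <= phi x <= 1),
      phi 0 = 1,
      {within `[0, +oo[, continuous phi} &
      phi x @[x --> +oo] --> 0].

(* pseudo-inverse psi(u) = inf {x >= 0 | phi x = u}, with inf set0 = +oo *)
Definition gen_pinv {R : realType} (phi : R -> R) (u : R) : \bar R :=
  ereal_inf [set x%:E | x in [set x | 0 <= x /\ phi x = u]].

Definition gen_ext {R : realType} (phi : R -> R) (y : \bar R) : R :=
  match y with
  | r%:E => phi r
  | +oo%E => 0
  | -oo%E => 1
  end.

Definition arch_cdf {R : realType} (n : nat) (phi : R -> R) (u : 'I_n -> R) : R :=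
  gen_ext phi (\sum_(i < n) gen_pinv phi (u i))%E.

Definition log_convex0 {R : realType} (phi : R -> R) : Prop :=
  forall x y t, 0 <= x -> 0 <= y -> 0 <= t <= 1 ->
    phi (t * x + (1 - t) * y) <= phi x `^ t * phi y `^ (1 - t).

Definition super_additive0 {R : realType} (h : R -> \bar R) : Prop :=
  forall x y, 0 <= x -> 0 <= y -> (h x + h y <= h (x + y)%R)%E.

Definition abs_cont_df_nonneg {R : realType} (G : R -> R) : Prop :=
  exists f : R -> R,
    [/\ measurable_fun setT f, (forall x, 0 <= f x),
        (\int[@lebesgue_measure R]_(y in setT) (f y)%:E = 1)%E,
        (forall x, x < 0 -> G x = 0) &
        (forall x, G x = fine (\int[@lebesgue_measure R]_(y in `]-oo, x]) (f y)%:E))].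

Definition sort_dec {R : realType} (n : nat) (a : 'I_n -> R) : seq R :=
  sort (fun x y => y <= x) [seq a i | i <- enum 'I_n].

Definition prod_majorized {R : realType} (n : nat) (b a : 'I_n -> R) : Prop :=
  forall j, (1 <= j <= n)%N ->
    \prod_(x <- take j (sort_dec b)) x <= \prod_(x <- take j (sort_dec a)) x.

Definition vmax {R : realType} (n : nat) (x : 'I_n -> R) : \bar R :=
  \big[maxe/-oo%E]_(i < n) (x i)%:E.

(* Main.v *)
Require Import Defs.
From HB Require Import structures.
From mathcomp Require Import all_boot all_order all_algebra.
From mathcomp Require Import all_classical all_reals all_analysis.
From mathcomp Require Import ring lra measurable_realfun.
Import Order.TTheory GRing.Theory Num.Theory.
Import numFieldNormedType.Exports.
Local Open Scope classical_set_scope.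
Local Open Scope ring_scope.
Set Implicit Arguments. Unset Strict Implicit. Unset Printing Implicit Defensive.

Definition gok {R : realType} (phi : R -> R) :=
  [/\ (forall x y, 0 <= x -> x <= y -> phi y <= phi x),
      (forall x, 0 <= x -> 0 <= phi x <= 1), phi 0 = 1,
      {within `[0, +oo[, continuous phi} & phi x @[x --> +oo] --> 0].

Lemma gok_of {R : realType} n (phi : R -> R) : (2 <= n)%N -> arch_generator n phi -> gok phi.
Proof.
move=> n2 [[hd hs hm hc] h01 h0 hcont hlim]; split => //.
move=> x y; rewrite le_eqVlt => /predU1P[<- |x0 xy].
  by move=> y0; rewrite h0; case/andP: (h01 y y0).
have y0 : 0 < y by exact: lt_le_trans xy.
clear hc; case: n n2 hd hs hm => [//|[//|[|k]]] _ hd hs hm.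
  by have := hm x y x0 xy; rewrite /= !expr0 !mul1r.
apply: (@ler0_derive1_nincr _ phi x y) => //.
- move=> z /[dup] zi; rewrite in_itv /= => /andP[xz _].
  by apply: (hd 0%N z) => //; exact: lt_trans xz.
- move=> z; rewrite in_itv /= => /andP[xz _].
  have := hs 1%N z isT (lt_trans x0 xz).
  by rewrite expr1 mulN1r oppr_ge0.
- apply: continuous_subspaceW hcont => z /=; rewrite !in_itv /= => /andP[xz _].
  by rewrite andbT (le_trans (ltW x0) xz).
Qed.

Local Open Scope ereal_scope.
Lemma pinv_ge0 {R : realType} (phi : R -> R) v : 0 <= gen_pinv phi v.
Proof.
by apply: le_ereal_inf_tmp => _ [x [x0 _] <-]; rewrite lee_fin.
Qed.

Lemma pinv_le {R : realType} (phi : R -> R) v x :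
  (0 <= x)%R -> phi x = v -> gen_pinv phi v <= x%:E.
Proof. by move=> x0 hx; apply: ereal_inf_lbound; exists x. Qed.
Local Close Scope ereal_scope.

Lemma ivt0 {R : realType} (phi : R -> R) v x : gok phi ->
  0 <= x -> phi x <= v <= 1 -> exists c, [/\ 0 <= c, c <= x & phi c = v].
Proof.
move=> [hm h01 h0 hc hl] x0 /andP[xv v1].
have sub : `[0, x] `<=` `[0, +oo[ by move=> z /=; rewrite !in_itv /= andbT => /andP[].
have [||c cI hc'] := @IVT R phi 0 x v x0.
- exact: continuous_subspaceW sub hc.
- by rewrite h0 (min_idPr (proj2 (andP (h01 x x0)))) (max_idPl (proj2 (andP (h01 x x0)))) xv v1.
by move: cI; rewrite in_itv /= => /andP[c0 cx]; exists c.
Qed.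

Lemma pinv_le2 {R : realType} (phi : R -> R) v x : gok phi ->
  0 <= x -> phi x <= v <= 1 -> (gen_pinv phi v <= x%:E)%E.
Proof.
move=> g x0 h; have [c [c0 cx hc']] := ivt0 g x0 h.
by apply: le_trans (pinv_le c0 hc') _; rewrite lee_fin.
Qed.

Lemma pinv_ex {R : realType} (phi : R -> R) v : gok phi ->
  0 < v <= 1 -> exists x, 0 <= x /\ phi x = v.
Proof.
move=> g /andP[v0 v1]; have [hm h01 h0 hc hl] := g.
have [M [Mr HM]] := proj1 (cvgrPdist_lt _ _) hl v v0.
set x := Num.max M 0 + 1.
have Mx : M < x by rewrite /x ltr_pwDr // le_max lexx.
have x0 : 0 <= x by rewrite /x addr_ge0 // le_max lexx orbT.
have := HM x Mx; rewrite sub0r normrN ger0_norm; last by case/andP: (h01 x x0).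
move=> /ltW xv.
have [c [c0 _ hc']] := ivt0 g x0 (introT andP (conj xv v1)).
by exists c.
Qed.

Lemma pinv_attain {R : realType} (phi : R -> R) v : gok phi ->
  (exists x, 0 <= x /\ phi x = v) ->
  exists r, [/\ 0 <= r, gen_pinv phi v = r%:E & phi r = v].
Proof.
move=> [hm h01 h0 hc hl] ex.
set S := [set x | 0 <= x /\ phi x = v].
have lbS : has_lbound S by exists 0 => y [].
have neS : S !=set0 by [].
have E : gen_pinv phi v = (inf S)%:E by rewrite -ereal_inf_EFin.
have r0 : 0 <= inf S by apply: lb_le_inf neS _ => y [].
exists (inf S); split => //.
have [x0 [x00 hx0]] := ex.
apply/eqP; rewrite eq_le; apply/andP; split; last first.
  by rewrite -hx0; apply: hm => //; apply: ge_inf lbS _ _.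
rewrite leNgt; apply/negP => vr.
have rS : ~ S (inf S) by move=> [_ /eqP]; rewrite gt_eqF.
have right : phi x @[x --> (inf S)^'+] --> phi (inf S).
  have [cf fa] := proj1 (continuous_within_itvcyP 0 phi) hc.
  move: r0; rewrite le_eqVlt => /predU1P[<-|rp] //.
  by apply: cvg_at_right_filter; apply: cf; rewrite in_itv /= rp.
have N : \forall t \near (inf S)^'+, `|phi (inf S) - phi t| < phi (inf S) - v.
  by apply: (proj1 (cvgrPdist_lt _ _) right); rewrite subr_gt0.
have NN : ~ (\forall t \near (inf S)^'+, `|phi (inf S) - phi t| < phi (inf S) - v).
  apply/not_near_at_rightP.
move=> e.
have [x Sx xlt] := inf_adherent (gt0 e) (conj neS lbS).
exists x.
  apply/andP; split => //; rewrite lt_neqAle ge_inf // andbT.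
  by apply/eqP => ex'; apply: rS; rewrite ex'.
by case: Sx => _ ->; rewrite ger0_norm ?ltxx // subr_ge0 ltW.
exact: NN N.
Qed.


Lemma ext_pinv {R : realType} (phi : R -> R) v : gok phi -> 0 <= v <= 1 ->
  gen_ext phi (gen_pinv phi v) = v.
Proof.
move=> g /andP[v0 v1].
case: (pselect (exists x, 0 <= x /\ phi x = v)) => [ex|ne].
  by have [r [_ -> <-]] := pinv_attain g ex.
have vz : v = 0.
  apply/eqP; rewrite eq_le v0 andbT leNgt; apply/negP => vp.
  by apply: ne; apply: pinv_ex g _; rewrite vp v1.
rewrite /gen_pinv.
have -> : [set x%:E | x in [set x | 0 <= x /\ phi x = v]] = set0.
  by apply/seteqP; split => // y [x hx _]; apply: ne; exists x.
by rewrite ereal_inf0.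
Qed.

Lemma ext_01 {R : realType} (phi : R -> R) a : gok phi -> (0 <= a)%E ->
  0 <= gen_ext phi a <= 1.
Proof.
move=> [hm h01 h0 hc hl]; case: a => [r||] //=; last by rewrite lexx ler01.
by rewrite lee_fin; apply: h01.
Qed.

Lemma ext_mono {R : realType} (phi : R -> R) a b : gok phi -> (0 <= a)%E ->
  (a <= b)%E -> gen_ext phi b <= gen_ext phi a.
Proof.
move=> g a0 ab; have [hm h01 h0 hc hl] := g.
case: b ab => [s||] ab.
- case: a a0 ab => [r||] //= a0 ab.
  by apply: hm; rewrite -lee_fin.
- by case/andP: (ext_01 g a0).
- by case: a a0 ab.
Qed.

Lemma pinv_mono {R : realType} (phi : R -> R) v1 v2 : gok phi ->
  0 <= v1 -> v1 <= v2 -> v2 <= 1 -> (gen_pinv phi v2 <= gen_pinv phi v1)%E.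
Proof.
move=> g v10 v12 v21.
have := pinv_ge0 phi v1.
case E: (gen_pinv phi v1) => [r||] // r0; last exact: leey.
have := ext_pinv g (introT andP (conj v10 (le_trans v12 v21))).
rewrite E /= => hr.
by apply: pinv_le2 => //; rewrite hr v12 v21.
Qed.

Definition slope {R : realType} (f : R -> R) a b := (f a - f b) / (a - b).
Definition convf {R : realType} (f : R -> R) := forall a b t, 0 <= t <= 1 ->
  f (t * a + (1 - t) * b) <= t * f a + (1 - t) * f b.

Lemma chord3 {R : realType} (f : R -> R) p q s : convf f -> p < q -> q < s ->
  f q * (s - p) <= (s - q) * f p + (q - p) * f s.
Proof.
move=> cf pq qs; have ps : 0 < s - p by rewrite subr_gt0 (lt_trans pq qs).
set t := (s - q) / (s - p).
have t01 : 0 <= t <= 1.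
  apply/andP; split; first by apply: divr_ge0; rewrite subr_ge0 ltW // (lt_trans pq qs).
  by rewrite ler_pdivrMr // mul1r lerD2l lerN2 ltW.
have := cf p s t t01.
have -> : t * p + (1 - t) * s = q by rewrite /t; field; rewrite subr_eq0 gt_eqF // (lt_trans pq qs).
move=> h; apply: le_trans (ler_wpM2r (ltW ps) h) _.
rewrite le_eqVlt; apply/orP; left; apply/eqP.
by rewrite /t; field; rewrite subr_eq0 gt_eqF // (lt_trans pq qs).
Qed.

Lemma slope_sym {R : realType} (f : R -> R) a b : slope f a b = slope f b a.
Proof. by rewrite /slope -[a - b]opprB -[f a - f b]opprB invrN mulrNN. Qed.

Lemma slope_le1 {R : realType} (f : R -> R) p q s : convf f -> p < q -> q <= s ->
  slope f p q <= slope f p s.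
Proof.
move=> cf pq; rewrite le_eqVlt => /predU1P[<-//|qs].
have C := chord3 cf pq qs.
have ps : 0 < s - p by rewrite subr_gt0 (lt_trans pq qs).
have qp : 0 < q - p by rewrite subr_gt0.
rewrite (slope_sym f p q) (slope_sym f p s) /slope.
rewrite ler_pdivrMr // mulrAC ler_pdivlMr //.
nra.
Qed.

Lemma slope_le2 {R : realType} (f : R -> R) p r s : convf f -> p <= r -> r < s ->
  slope f p s <= slope f r s.
Proof.
move=> cf; rewrite le_eqVlt => /predU1P[<-//|pr] rs.
have C := chord3 cf pr rs.
have ps : 0 < s - p by rewrite subr_gt0 (lt_trans pr rs).
have sr : 0 < s - r by rewrite subr_gt0.
rewrite (slope_sym f p) (slope_sym f r) /slope.
rewrite ler_pdivrMr // mulrAC ler_pdivlMr //.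
nra.
Qed.

Lemma slope_mono {R : realType} (f : R -> R) a b c d : convf f ->
  a != b -> c != d -> a <= c -> b <= d -> slope f a b <= slope f c d.
Proof.
move=> cf ab cd ac bd.
have key : forall p q r s, p < q -> r < s -> p <= r -> q <= s ->
    slope f p q <= slope f r s.
  move=> p q r s pq rs pr qs.
  exact: le_trans (slope_le1 cf pq qs) (slope_le2 cf pr rs).
case: (ltgtP a b) ab => // [ab' | ba'] _; case: (ltgtP c d) cd => // [cd' | dc'] _.
- exact: key.
- rewrite (slope_sym f c); apply: key => //; first exact: le_trans (ltW ab') bd.
  exact: le_trans bd (ltW dc').
- rewrite (slope_sym f a); apply: key => //; first exact: le_trans (ltW ba') ac.
  exact: le_trans ac (ltW cd').
- by rewrite (slope_sym f a) (slope_sym f c); apply: key.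
Qed.

Definition geR {R : realType} := fun x y : R => y <= x.

Lemma tw_aux {R : realType} (f : R -> R) : convf f -> {homo f : x y / x <= y} ->
  forall (xs ys : seq R), size xs = size ys -> forall U V K p,
  path geR U xs -> path geR V ys -> 0 <= K -> 0 <= p ->
  (forall a b, a != b -> a <= U -> b <= V -> slope f a b <= K) ->
  (forall j, 0 <= p + (\sum_(x <- take j xs) x - \sum_(y <- take j ys) y)) ->
  0 <= K * p + (\sum_(x <- xs) f x - \sum_(y <- ys) f y).
Proof.
move=> cf fm; elim=> [|x0 xs IH] [|y0 ys] //=.
  by move=> _ U V K p _ _ K0 p0 _ _; rewrite !big_nil subrr addr0 mulr_ge0.
move=> [sz] U V K p /andP[x0U px] /andP[y0V py] K0 p0 hs hj.
have h1 := hj 1%N; rewrite /= !take0 !big_cons !big_nil !addr0 in h1.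
have hj' : forall j, 0 <= (p + (x0 - y0)) + (\sum_(x <- take j xs) x - \sum_(y <- take j ys) y).
  move=> j; have := hj j.+1; rewrite /= !big_cons.
  by rewrite (_ : x0 + _ - (y0 + _) = (x0 - y0) + (\sum_(x <- take j xs) x - \sum_(y <- take j ys) y)) ?addrA //; ring.
rewrite !big_cons.
set D := (\sum_(x <- xs) f x - \sum_(y <- ys) f y).
have [e|ne] := eqVneq x0 y0.
  have H : 0 <= K * (p + (x0 - y0)) + D.
    apply: (IH ys sz x0 y0 K) => // a b ab ax by'; apply: hs => //.
      exact: le_trans ax x0U.
    exact: le_trans by' y0V.
  move: H; rewrite e subrr addr0.
  by rewrite (_ : f y0 + _ - _ = D) // /D; ring.
set c := slope f x0 y0.
have cK : c <= K by apply: hs.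
have c0 : 0 <= c.
  rewrite /c /slope; case: (ltgtP x0 y0) ne => // [xy|yx] _.
    by rewrite -[f x0 - f y0]opprB -[x0 - y0]opprB invrN mulrNN; apply: divr_ge0; rewrite subr_ge0 ?(fm _ _ (ltW xy)) ?(ltW xy).
  by apply: divr_ge0; rewrite subr_ge0 ?(fm _ _ (ltW yx)) ?(ltW yx).
have fx : f x0 - f y0 = c * (x0 - y0).
  by rewrite /c /slope -mulrA mulVf ?mulr1 // subr_eq0.
have H : 0 <= c * (p + (x0 - y0)) + D.
  apply: (IH ys sz x0 y0 c) => // a b ab ax by'; exact: slope_mono.
have H2 : 0 <= (K - c) * p by rewrite mulr_ge0 // subr_ge0.
have -> : K * p + (f x0 + \sum_(x <- xs) f x - (f y0 + \sum_(y <- ys) f y)) = (K - c) * p + (c * (p + (x0 - y0)) + D).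
  have -> : f x0 + \sum_(x <- xs) f x - (f y0 + \sum_(y <- ys) f y) = (f x0 - f y0) + D by rewrite /D; ring.
  by rewrite fx; ring.
by rewrite addr_ge0.
Qed.

Lemma tw {R : realType} (f : R -> R) : convf f -> {homo f : x y / x <= y} ->
  forall (xs ys : seq R), size xs = size ys -> sorted geR xs -> sorted geR ys ->
  (forall j, \sum_(y <- take j ys) y <= \sum_(x <- take j xs) x) ->
  \sum_(y <- ys) f y <= \sum_(x <- xs) f x.
Proof.
move=> cf fm [|x0 xs] [|y0 ys] //= sz sx sy hj.
set M := Num.max x0 y0.
have := @tw_aux R f cf fm (x0 :: xs) (y0 :: ys) sz M M (slope f M (M + 1)) 0.
rewrite mulr0 add0r subr_ge0; apply => //=.
- by rewrite sx andbT /geR le_max lexx.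
- by rewrite sy andbT /geR le_max lexx orbT.
- rewrite slope_sym /slope; apply: divr_ge0; rewrite subr_ge0 ?fm // ?lerDl //.
- move=> a b ab aM bM; apply: slope_mono => //.
    by rewrite eq_sym gt_eqF // ltrDl.
  by apply: le_trans bM _; rewrite lerDl.
- by move=> j; rewrite add0r subr_ge0.
Qed.

Lemma fin_pinv {R : realType} (phi : R -> R) w : gok phi -> 0 < w <= 1 ->
  exists r, [/\ 0 <= r, gen_pinv phi w = r%:E & phi r = w].
Proof. by move=> g hw; apply: pinv_attain g (pinv_ex g hw). Qed.

Lemma powu_01 {R : realType} (u a : R) : 0 < u < 1 -> 0 < a -> 0 < u `^ a <= 1.
Proof.
move=> /andP[u0 u1] a0; rewrite powR_gt0 //= /powR gt_eqF //.
rewrite expR_le1 mulr_ge0_le0 ?ltW //.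
by rewrite ln_lt0 // u0 u1.
Qed.

Definition Ff {R : realType} (phi : R -> R) (u : R) (z : R) :=
  fine (gen_pinv phi (u `^ expR z)).

Lemma Ff_spec {R : realType} (phi : R -> R) u z : gok phi -> 0 < u < 1 ->
  [/\ 0 <= Ff phi u z, gen_pinv phi (u `^ expR z) = (Ff phi u z)%:E &
      phi (Ff phi u z) = u `^ expR z].
Proof.
move=> g hu; have [r [r0 E pr]] := fin_pinv g (powu_01 hu (expR_gt0 z)).
by rewrite /Ff E /=.
Qed.

Lemma Ff_mono {R : realType} (phi : R -> R) u : gok phi -> 0 < u < 1 ->
  {homo Ff phi u : x y / x <= y}.
Proof.
move=> g hu z1 z2 z12.
have [_ E1 _] := Ff_spec z1 g hu; have [_ E2 _] := Ff_spec z2 g hu.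
rewrite -lee_fin -E1 -E2; apply: pinv_mono => //.
- by case/andP: (powu_01 hu (expR_gt0 z2)) => /ltW.
- case/andP: hu => u0 u1; rewrite /powR gt_eqF // ler_expR.
  by rewrite ler_nM2r ?ln_lt0 ?u0 ?u1 // ler_expR.
- by case/andP: (powu_01 hu (expR_gt0 z1)).
Qed.

Lemma expR_cvx {R : realType} (a b t : R) : 0 <= t <= 1 ->
  expR (t * a + (1 - t) * b) <= t * expR a + (1 - t) * expR b.
Proof.
move=> /andP[t0 t1]; set z := t * a + (1 - t) * b.
have E0 := expR_gt0 z.
have key : forall c, expR z * (1 + (c - z)) <= expR c.
  move=> c; rewrite -[X in _ <= X](_ : expR z * expR (c - z) = _); last first.
    by rewrite -expRD addrC subrK.
  by apply: ler_wpM2l; [exact: ltW E0 | exact: expR_ge1Dx].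
have ha := key a; have hb := key b.
have t1' : 0 <= 1 - t by rewrite subr_ge0.
have : t * (expR z * (1 + (a - z))) + (1 - t) * (expR z * (1 + (b - z))) <= t * expR a + (1 - t) * expR b.
  by apply: lerD; apply: ler_wpM2l.
apply: le_trans; rewrite le_eqVlt; apply/orP; left; apply/eqP.
by rewrite /z; ring.
Qed.

Lemma Ff_conv {R : realType} (phi : R -> R) u : gok phi -> log_convex0 phi ->
  0 < u < 1 -> convf (Ff phi u).
Proof.
move=> g lc hu a b t /andP[t0 t1].
have [r10 E1 p1] := Ff_spec a g hu; have [r20 E2 p2] := Ff_spec b g hu.
set z := t * a + (1 - t) * b.
have [_ Ez _] := Ff_spec z g hu.
have t1' : 0 <= 1 - t by rewrite subr_ge0.
set x := t * Ff phi u a + (1 - t) * Ff phi u b.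
have x0 : 0 <= x by rewrite addr_ge0 // mulr_ge0.
rewrite -lee_fin -Ez; apply: pinv_le2 => //.
have [u0 u1] := andP hu.
have L : ln u < 0 by rewrite ln_lt0 // u0 u1.
apply/andP; split; last by case/andP: (powu_01 hu (expR_gt0 z)).
apply: le_trans (lc _ _ _ r10 r20 (introT andP (conj t0 t1))) _.
rewrite p1 p2 /powR !gt_eqF ?expR_gt0 // !expRK.
rewrite -expRD ler_expR.
have C := expR_cvx a b (introT andP (conj t0 t1)).
rewrite -/z in C.
nra.
Qed.

Lemma lnsum {R : realType} (s : seq R) : (forall x, x \in s -> 0 < x) ->
  0 < \prod_(x <- s) x /\ \sum_(x <- map (@ln R) s) x = ln (\prod_(x <- s) x).
Proof.
elim: s => [|x s IH] hs; first by rewrite !big_nil ln1 ltr01.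
have [P E] := IH (fun y ys => hs y (@mem_behead _ (x :: s) y ys)).
have x0 : 0 < x by apply: hs; rewrite mem_head.
by rewrite /= !big_cons mulr_gt0 // lnM ?posrE // E.
Qed.

Lemma sort_pos {R : realType} n (a : 'I_n -> R) : (forall i, 0 < a i) ->
  forall x, x \in sort_dec a -> 0 < x.
Proof. by move=> a0 x; rewrite mem_sort => /mapP[i _ ->]. Qed.

Lemma size_sd {R : realType} n (a : 'I_n -> R) : size (sort_dec a) = n.
Proof. by rewrite size_sort size_map size_enum_ord. Qed.

Lemma sum_sd {R : realType} n (a : 'I_n -> R) (g : R -> R) :
  \sum_(i < n) g (a i) = \sum_(x <- sort_dec a) g x.
Proof.
rewrite /sort_dec (perm_big _ (permEl (perm_sort _ _))) big_map big_enum /=.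
by apply: eq_bigl => i; rewrite inE.
Qed.

Lemma maj {R : realType} (phi : R -> R) u n (al als : 'I_n -> R) :
  gok phi -> log_convex0 phi -> 0 < u < 1 ->
  (forall i, 0 < al i) -> (forall i, 0 < als i) -> prod_majorized als al ->
  (\sum_(i < n) gen_pinv phi (u `^ als i) <= \sum_(i < n) gen_pinv phi (u `^ al i))%E.
Proof.
move=> g lc hu al0 als0 pm.
have E : forall a : 'I_n -> R, (forall i, 0 < a i) ->
    (\sum_(i < n) gen_pinv phi (u `^ a i) = (\sum_(x <- map (@ln R) (sort_dec a)) Ff phi u x)%:E)%E.
  move=> a a0; rewrite big_map -(sum_sd a (fun x => Ff phi u (ln x))) -sumEFin.
  apply: eq_bigr => i _; have [_ Ez _] := Ff_spec (ln (a i)) g hu.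
  by rewrite lnK ?posrE // in Ez.
rewrite (E _ al0) (E _ als0) lee_fin.
apply: tw.
- exact: Ff_conv.
- exact: Ff_mono.
- by rewrite !size_map !size_sd.
- apply: (@homo_sorted_in _ _ [pred x : R | 0 < x] (@ln R) geR geR).
  + by move=> x y; rewrite !inE => x0 y0; rewrite /geR ler_ln ?posrE.
  + by apply/allP => x /(sort_pos al0).
  + by apply: sort_sorted => x y; exact: le_total.
- apply: (@homo_sorted_in _ _ [pred x : R | 0 < x] (@ln R) geR geR).
  + by move=> x y; rewrite !inE => x0 y0; rewrite /geR ler_ln ?posrE.
  + by apply/allP => x /(sort_pos als0).
  + by apply: sort_sorted => x y; exact: le_total.
have key : forall j, (j <= n)%N ->
    \sum_(y <- take j (map (@ln R) (sort_dec als))) y <= \sum_(x <- take j (map (@ln R) (sort_dec al))) x.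
  move=> j jn; rewrite -!map_take.
  have [Pa Ea] := @lnsum R (take j (sort_dec al)) (fun x xs => sort_pos al0 (mem_take xs)).
  have [Pb Eb] := @lnsum R (take j (sort_dec als)) (fun x xs => sort_pos als0 (mem_take xs)).
  rewrite Ea Eb ler_ln ?posrE //.
  case: j jn {Ea Eb Pa Pb} => [|j] jn; first by rewrite !take0 !big_nil.
  by apply: pm; rewrite jn.
move=> j; case: (leqP j n) => [|nj]; first exact: key.
rewrite !take_oversize ?size_map ?size_sd ?(ltnW nj) //.
by have := key n (leqnn n); rewrite !take_oversize ?size_map ?size_sd.
Qed.

Lemma sa_sum {R : realType} (h : R -> \bar R) (I : Type) (r : seq I) (a : I -> R) :
  super_additive0 h -> (forall x, (0 <= h x)%E) -> (forall i, 0 <= a i) ->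
  (\sum_(i <- r) h (a i) <= h (\sum_(i <- r) a i)%R)%E.
Proof.
move=> sa h0 a0; elim: r => [|i r IH]; first by rewrite !big_nil.
rewrite !big_cons; apply: le_trans (sa _ _ (a0 i) (sumr_ge0 _ (fun j _ => a0 j))).
exact: leeD.
Qed.

Lemma chain_sa {R : realType} (phi1 phi2 : R -> R) n (v : 'I_n -> R) :
  gok phi1 -> gok phi2 -> super_additive0 (fun x => gen_pinv phi2 (phi1 x)) ->
  (forall i, 0 <= v i <= 1) -> arch_cdf phi1 v <= arch_cdf phi2 v.
Proof.
move=> g1 g2 sa v01; rewrite /arch_cdf.
have S2 : (0 <= \sum_(i < n) gen_pinv phi2 (v i))%E.
  by apply: sume_ge0 => i _; apply: pinv_ge0.
case: (pselect (exists i, gen_pinv phi1 (v i) = +oo%E)) => [[i hi]|ne].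
  rewrite (bigD1 i) //= hi addye /=; first by case/andP: (ext_01 g2 S2).
  by rewrite gt_eqF // (lt_le_trans _ (sume_ge0 _ _)) // => j _; apply: pinv_ge0.
pose a i := fine (gen_pinv phi1 (v i)).
have Ea : forall i, gen_pinv phi1 (v i) = (a i)%:E.
  move=> i; rewrite /a fineK // ge0_fin_numE ?pinv_ge0 // ltey.
  by apply/eqP => hi; apply: ne; exists i.
have a0 : forall i, 0 <= a i by move=> i; rewrite -lee_fin -Ea pinv_ge0.
have pa : forall i, phi1 (a i) = v i.
  by move=> i; have := ext_pinv g1 (v01 i); rewrite Ea.
rewrite (eq_bigr _ (fun i _ => Ea i)) sumEFin /=.
set A := \sum_(i < n) a i.
have A0 : 0 <= A by apply: sumr_ge0.
have pA : 0 <= phi1 A <= 1 by case: g1 => _ h01 _ _ _; apply: h01.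
rewrite -{1}(ext_pinv g2 pA); apply: ext_mono => //.
rewrite -(eq_bigr _ (fun i _ => congr1 (gen_pinv phi2) (pa i))).
exact: (@sa_sum R (fun x => gen_pinv phi2 (phi1 x)) _ (index_enum 'I_n) a sa
  (fun x => pinv_ge0 _ _) a0).
Qed.

Lemma core {R : realType} n (phi1 phi2 : R -> R) (al als : 'I_n -> R) (u : R) :
  (0 < n)%N -> gok phi1 -> gok phi2 ->
  (forall i, 0 < al i) -> (forall i, 0 < als i) ->
  log_convex0 phi1 \/ log_convex0 phi2 ->
  super_additive0 (fun x => gen_pinv phi2 (phi1 x)) ->
  prod_majorized als al -> 0 <= u <= 1 ->
  arch_cdf phi1 (fun i => u `^ al i) <= arch_cdf phi2 (fun i => u `^ als i).
Proof.
move=> n0 g1 g2 al0 als0 lc sa pm /andP[u0 u1].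
have [uz|upos] := eqVneq u 0.
  rewrite uz /arch_cdf.
  rewrite (eq_bigr (fun=> gen_pinv phi1 0)); last by move=> i _; rewrite powR0 // gt_eqF.
  apply: (@le_trans _ _ 0).
    rewrite -{2}(@ext_pinv R phi1 0 g1 (introT andP (conj (lexx 0) ler01))).
    apply: ext_mono => //; first exact: pinv_ge0.
    rewrite (bigD1 (Ordinal n0)) //= leeDl //.
    by apply: sume_ge0 => i _; apply: pinv_ge0.
  have S : (0 <= \sum_(i < n) gen_pinv phi2 (0 `^ als i))%E.
    by apply: sume_ge0 => i _; apply: pinv_ge0.
  by case/andP: (ext_01 g2 S).
have [u1'|ult] := eqVneq u 1.
  rewrite u1' powR1.
  by apply: chain_sa => // i; rewrite ler01 lexx.
have hu : 0 < u < 1 by rewrite lt_neqAle eq_sym upos u0 lt_neqAle ult u1.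
have v01 : forall a : 'I_n -> R, (forall i, 0 < a i) -> forall i, 0 <= u `^ a i <= 1.
  by move=> a a0 i; case/andP: (powu_01 hu (a0 i)) => /ltW -> ->.
case: lc => lc.
  apply: le_trans (chain_sa g1 g2 sa (v01 _ als0)).
  rewrite /arch_cdf; apply: ext_mono => //.
    by apply: sume_ge0 => i _; apply: pinv_ge0.
  exact: maj.
apply: le_trans (chain_sa g1 g2 sa (v01 _ al0)) _.
rewrite /arch_cdf; apply: ext_mono => //.
  by apply: sume_ge0 => i _; apply: pinv_ge0.
exact: maj.
Qed.

Lemma G01 {R : realType} (G : R -> R) : abs_cont_df_nonneg G -> forall x, 0 <= G x <= 1.
Proof.
move=> [f [mf f0 int1 Gneg GE]] x; rewrite GE.
have I0 : (0 <= \int[@lebesgue_measure R]_(y in `]-oo, x]) (f y)%:E)%E.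
  by apply: integral_ge0 => y _; rewrite lee_fin.
have I1 : (\int[@lebesgue_measure R]_(y in `]-oo, x]) (f y)%:E <= 1)%E.
  rewrite -int1; apply: ge0_subset_integral => //.
  - by apply/measurable_EFinP; exact: mf.
  - by move=> y _; rewrite lee_fin.
move: I0 I1; case: (\int[_]_(_ in _) _)%E => [r||] //=.
by rewrite !lee_fin => -> ->.
Qed.

Lemma ev_eq {R : realType} (T : Type) n (Y : 'I_n -> T -> R) t :
  [set w | (t%:E < vmax (fun i => Y i w))%E] = ~` [set w | forall i, Y i w <= t].
Proof.
apply/seteqP; split => w /=.
  move=> lt hall; move: lt; apply/negP; rewrite -leNgt.
  by apply: bigmax_le => [|i _]; rewrite ?leNye // lee_fin.
move=> /existsNP[i /negP]; rewrite -ltNge => lt.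
apply: (lt_le_trans (_ : t%:E < (Y i w)%:E)%E); first by rewrite lte_fin.
by rewrite /vmax (bigD1 i) //= le_max lexx.
Qed.

Lemma ev_meas {R : realType} d (T : measurableType d) (P : probability T R) n
  (X : 'I_n -> {RV P >-> R}) t : measurable [set w | forall i, X i w <= t].
Proof.
have -> : [set w | forall i, X i w <= t] = \bigcap_(i in setT) (X i @^-1` [set` `]-oo, t]]).
  apply/seteqP; split => w /=.
    by move=> h i _; rewrite /= in_itv /= h.
  by move=> h i; have := h i I; rewrite /= in_itv.
apply: fin_bigcap_measurable; first exact: finite_finset.
by move=> i _; apply: measurable_funPTI; exact: measurable_itv.
Qed.

Unset Implicit Arguments.

Theorem mainTheorem13 (R : realType) (n : nat) (G : R -> R) (lam : R)
  (alpha alphas : 'I_n -> R) (phi1 phi2 : R -> R)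
  (d1 : measure_display) (T1 : measurableType d1) (P1 : probability T1 R)
  (X : 'I_n -> {RV P1 >-> R})
  (d2 : measure_display) (T2 : measurableType d2) (P2 : probability T2 R)
  (Xs : 'I_n -> {RV P2 >-> R}) :
  (2 <= n)%N ->
  abs_cont_df_nonneg G ->
  0 < lam ->
  (forall i, 0 < alpha i) -> (forall i, 0 < alphas i) ->
  arch_generator n phi1 -> arch_generator n phi2 ->
  (forall x : 'I_n -> R,
     P1 [set w | forall i, X i w <= x i]
     = (arch_cdf phi1 (fun i => G (lam * x i) `^ alpha i))%:E) ->
  (forall x : 'I_n -> R,
     P2 [set w | forall i, Xs i w <= x i]
     = (arch_cdf phi2 (fun i => G (lam * x i) `^ alphas i))%:E) ->
  log_convex0 phi1 \/ log_convex0 phi2 ->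
  super_additive0 (fun x => gen_pinv phi2 (phi1 x)) ->
  prod_majorized alphas alpha ->
  forall t : R,
    (P2 [set w | (t%:E < vmax (fun i => Xs i w))%E]
     <= P1 [set w | (t%:E < vmax (fun i => X i w))%E])%E.
Proof.
move=> n2 hG lam0 al0 als0 ag1 ag2 H1 H2 lc sa pm t.
have g1 := gok_of n2 ag1; have g2 := gok_of n2 ag2.
rewrite !ev_eq !probability_setC; [|exact: ev_meas|exact: ev_meas].
have E1 := H1 (fun=> t); have E2 := H2 (fun=> t); simpl in E1, E2.
rewrite E1 E2 -!EFinB lee_fin lerD2l lerN2.
apply: core => //; first exact: leq_trans n2.
exact: G01.
Qed.
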